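(* Let $G=(V,E)$ be a connected undirected graph with positive edge weights $w$, and run the distributed algorithm described in the context synchronously at every node. Then for every node $v\in V$ and every node $s\in V\setminus\{v\}$, at any time after the first $2\,\mathcal{D}(G)+1$ phases have been completed, the variable $B[v,s]$ at $v$ equals $\mathsf{bc}_v(s)$.
   Context: Graph notions. $G=(V,E)$ is connected, undirected, with weights $w(e)>0$; $N(v)$ is the set of neighbors of $v$ and $N[v]=N(v)\cup\{v\}$. The length of a path is the sum of its edge weights; $\mathrm{dist}(s,t)$ is the length of a shortest $s$–$t$ path. For $s\neq t$, $\mathrm{maxhop}(s,t)$ is the maximum number of edges of a shortest (minimum-length) $s$–$t$ path, $\mathrm{maxhop}(s,s)=0$, and $\mathcal{D}(G)=\max_{s,t\in V}\mathrm{maxhop}(s,t)$. $\sigma_{s,t}$ is the number of shortest $s$–$t$ paths ($\sigma_{s,s}=1$) and $\sigma_{s,t}(v)$ the number of those passing through $v$ ($\sigma_{s,s}(s)=1$). For $s\in V$, $\mathsf{bc}_v(s)=\sum_{t\neq v}\sigma_{s,t}(v)/\sigma_{s,t}$. Algorithm (at each node $v$). Initialization: for all $t\in V$: $D[t]=+\infty$, $\mathrm{NH}[t]=\mathrm{PH}[t]=\emptyset$, and for all $u\in N[v]$: $B[u,t]=0$, $S[u,t]=0$; then $S[v,v]=1$, $D[v]=0$. Execution proceeds in synchronous phases; in each phase every node $v$ sends, for every $t\in V$, the message $(t,D[t],S[v,t],B[v,t])$ to every neighbor, receives all messages sent to it by its neighbors in that phase, and processes each of them (in arbitrary order) as follows.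 On receipt of $(t,d,s,b)$ from $u\in N(v)$: remove $u$ from $\mathrm{NH}[t]$ and from $\mathrm{PH}[t]$; if $d+w(\{u,v\})<D[t]$ set $D[t]\leftarrow d+w(\{u,v\})$; else if $d+w(\{u,v\})=D[t]$ add $u$ to $\mathrm{NH}[t]$; else if $d-w(\{u,v\})=D[t]$ add $u$ to $\mathrm{PH}[t]$. Then set $S[u,t]\leftarrow s$, $B[u,t]\leftarrow b$; if $t\neq v$ set $S[v,t]\leftarrow\sum_{x\in\mathrm{NH}[t]}S[x,t]$; set $B[v,t]\leftarrow S[v,t]\cdot\sum_{x\in\mathrm{PH}[t]}\frac{B[x,t]+1}{S[x,t]}$ (a term with $S[x,t]=0$ is taken as $0$); finally set $C\leftarrow\sum_{x\neq v}B[v,x]$. *)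

(* Defs.v *)
From HB Require Import structures.
From mathcomp Require Import all_boot all_order all_algebra.
From mathcomp Require Export constructive_ereal.
Set Implicit Arguments. Unset Strict Implicit. Unset Printing Implicit Defensive.
Import Order.TTheory GRing.Theory Num.Theory.
Local Open Scope ring_scope.

Section Graph.
Variables (V : finType) (R : realFieldType).
(* the graph: a symmetric irreflexive adjacency relation (hypotheses in the
   theorem), with edge weights w u v *)
Variable adj : rel V.
Variable w : V -> V -> R.

Fixpoint seqs_upto (n : nat) : seq (seq V) :=
  if n is n'.+1 then [::] :: [seq x :: p | x <- enum V, p <- seqs_upto n']
  else [:: [::]].

(* A path from s is represented by s :: p; [spaths s t] lists all simple
   s-t paths (every shortest path is simple since weights are positive). *)
Definition spaths (s t : V) : seq (seq V) :=
  [seq p <- undup (seqs_upto #|V|) |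
     [&& path adj s p, uniq (s :: p) & last s p == t]].

Definition plen (s : V) (p : seq V) : R :=
  \sum_(e <- zip (s :: p) p) w e.1 e.2.

Definition shortest_paths (s t : V) : seq (seq V) :=
  [seq p <- spaths s t | all (fun q => plen s p <= plen s q) (spaths s t)].

(* sigma_{s,t}: number of shortest s-t paths (sigma_{s,s} = 1) *)
Definition sigma (s t : V) : nat := size (shortest_paths s t).

Definition sigma_through (s t v : V) : nat :=
  count (fun p => v \in s :: p) (shortest_paths s t).

Definition maxhop (s t : V) : nat := \max_(p <- shortest_paths s t) size p.

Definition hopdiam : nat := \max_(s : V) \max_(t : V) maxhop s t.

Definition bc (v s : V) : R :=
  \sum_(t : V | t != v) (sigma_through s t v)%:R / (sigma s t)%:R.

(* local state of a node v; D[t] is an extended real (+oo allowed);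
   S u t = S[u,t], B u t = B[u,t] (only entries u in N[v] are ever used). *)
Record lstate := LState {
  Dv : V -> \bar R;
  NH : V -> {set V};
  PH : V -> {set V};
  Sv : V -> V -> R;
  Bv : V -> V -> R;
  Cv : R }.

Definition init_state (v : V) : lstate :=
  LState (fun t => if t == v then 0%E else +oo%E)
         (fun _ => set0) (fun _ => set0)
         (fun u t => if (u == v) && (t == v) then 1 else 0)
         (fun _ _ => 0) 0.

Definition upd {A : Type} (f : V -> A) (x : V) (a : A) : V -> A :=
  fun y => if y == x then a else f y.

(* (B[x,t] + 1) / S[x,t], taken as 0 when S[x,t] = 0 *)
Definition ratio (b s : R) : R := if s == 0 then 0 else (b + 1) / s.

Definition process (v : V) (st : lstate) (u t : V) (d : \bar R) (s b : R)
  : lstate :=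
  let wuv := (w u v)%:E in
  let NH0 := NH st t :\ u in
  let PH0 := PH st t :\ u in
  let Dt := Dv st t in
  let '(Dt', NH1, PH1) :=
     if (d + wuv < Dt)%E then ((d + wuv)%E, NH0, PH0)
     else if (d + wuv)%E == Dt then (Dt, u |: NH0, PH0)
     else if (d - wuv)%E == Dt then (Dt, NH0, u |: PH0)
     else (Dt, NH0, PH0) in
  let S1 := fun x y => if (x == u) && (y == t) then s else Sv st x y in
  let B1 := fun x y => if (x == u) && (y == t) then b else Bv st x y in
  let Svt := if t != v then \sum_(x in NH1) S1 x t else S1 v t in
  let S2 := fun x y => if (x == v) && (y == t) then Svt else S1 x y in
  let Bvt := Svt * \sum_(x in PH1) ratio (B1 x t) (S1 x t) in
  let B2 := fun x y => if (x == v) && (y == t) then Bvt else B1 x y in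
  LState (upd (Dv st) t Dt') (upd (NH st) t NH1) (upd (PH st) t PH1)
         S2 B2 (\sum_(x | x != v) B2 v x).

Definition config := V -> lstate.

(* the messages v receives in one phase: for every neighbor u and every t,
   the message (t, D_u[t], S_u[u,t], B_u[u,t]) sent by u *)
Definition msgs (v : V) : seq (V * V) :=
  [seq (u, t) | u <- [seq u <- enum V | adj v u], t <- enum V].

(* delivery to v of the message about t from u, where c is the configuration
   at the start of the phase (when all messages were sent) *)
Definition deliver (c : config) (v : V) (st : lstate) (ut : V * V) : lstate :=
  process v st ut.1 ut.2 (Dv (c ut.1) ut.2) (Sv (c ut.1) ut.1 ut.2)
          (Bv (c ut.1) ut.1 ut.2).

(* one synchronous phase; [order v] is the (arbitrary) order in which v
   processes its received messages *)
Definition phase (order : V -> seq (V * V)) (c : config) : config :=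
  fun v => foldl (deliver c v) (c v) (order v).

Fixpoint run (sched : nat -> V -> seq (V * V)) (k : nat) : config :=
  if k is k'.+1 then phase (sched k') (run sched k') else init_state.

(* state of v after k completed phases and after processing the first j
   messages (in its processing order) of phase k+1: this covers every
   point in time *)
Definition state_at (sched : nat -> V -> seq (V * V)) (k j : nat) (v : V)
  : lstate :=
  foldl (deliver (run sched k) v) (run sched k v) (take j (sched k v)).

End Graph.

(* Main.v *)
Require Import Defs.
From HB Require Import structures.
From mathcomp Require Import all_boot all_order all_algebra.
From mathcomp Require Import constructive_ereal.
From mathcomp Require Import ring lra zify.
Import Order.TTheory GRing.Theory Num.Theory.
Set Implicit Arguments. Unset Strict Implicit. Unset Printing Implicit Defensive.
Local Open Scope ring_scope.

Section Comb.
Variables (V : finType) (R : realFieldType) (adj : rel V) (w : V -> V -> R).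
Hypothesis adj_sym : symmetric adj.
Hypothesis adj_irr : irreflexive adj.
Hypothesis connected : forall s t : V, connect adj s t.
Hypothesis w_sym : forall u v : V, adj u v -> w u v = w v u.
Hypothesis w_pos : forall u v : V, adj u v -> 0 < w u v.

Lemma plen_nil a : plen w a [::] = 0.
Proof. by rewrite /plen /= big_nil. Qed.

Lemma plen_cons a x p : plen w a (x :: p) = w a x + plen w x p.
Proof. by rewrite /plen /= big_cons. Qed.

Lemma plen_cat a p q : plen w a (p ++ q) = plen w a p + plen w (last a p) q.
Proof.
elim: p a => [|x p IH] a /=; first by rewrite plen_nil add0r.
by rewrite !plen_cons IH addrA.
Qed.

Lemma plen_ge0 a p : path adj a p -> 0 <= plen w a p.
Proof.
elim: p a => [|x p IH] a /=; first by rewrite plen_nil.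
move=> /andP[ax px]; rewrite plen_cons addr_ge0 ?IH //.
exact: ltW (w_pos ax).
Qed.

Lemma mem_seqs_upto n (p : seq V) : (size p <= n)%N -> p \in seqs_upto V n.
Proof.
elim: n p => [|n IH] [|x p] //=.
move=> hs; rewrite inE; apply/orP; right.
apply/allpairsPdep; exists x, p; split => //; first by rewrite mem_enum.
exact: IH.
Qed.

Lemma mem_spaths a t p :
  (p \in spaths adj a t) = [&& path adj a p, uniq (a :: p) & last a p == t].
Proof.
rewrite /spaths mem_filter mem_undup.
case: (boolP [&& _, _ & _]) => //= /and3P[_ u _].
apply: mem_seqs_upto.
have u' : uniq (a :: p) by [].
have := max_card (mem (a :: p)); rewrite (card_uniqP u') /=.
exact: ltnW.
Qed.

Lemma spaths_ex a t : exists p, p \in spaths adj a t.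
Proof.
have /connectP[p pp ->] := connected a t.
case: (shortenP pp) => p' pp' up' _.
by exists p'; rewrite mem_spaths pp' up' eqxx.
Qed.

Lemma argmin_ex (l : seq (seq V)) (f : seq V -> R) :
  l != [::] -> exists2 p, p \in l & forall q, q \in l -> f p <= f q.
Proof.
elim: l => [//|x l IH] _.
case: (altP (l =P [::])) => [->|ln].
  by exists x => [|q]; rewrite ?inE // => /eqP ->.
have [p pl hp] := IH ln.
case: (lerP (f x) (f p)) => hxp.
  exists x; first by rewrite inE eqxx.
  move=> q; rewrite inE => /orP[/eqP->//|/hp]; exact: le_trans.
exists p; first by rewrite inE pl orbT.
move=> q; rewrite inE => /orP[/eqP->|/hp//]; exact: ltW.
Qed.

Variable s : V.

Notation SP := (shortest_paths adj w s).

Lemma mem_SP0 t p : (p \in SP t) =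
  (p \in spaths adj s t) && all (fun q => plen w s p <= plen w s q) (spaths adj s t).
Proof. by rewrite /shortest_paths mem_filter andbC. Qed.

Lemma SP_ex t : exists p, p \in SP t.
Proof.
have [p0 hp0] := spaths_ex s t.
have [|p pl hp] := @argmin_ex (spaths adj s t) (plen w s).
  by apply/eqP => e; rewrite e in hp0.
by exists p; rewrite mem_SP0 pl; apply/allP => q /hp.
Qed.

Definition dd t := plen w s (head [::] (SP t)).

Lemma head_SP t : head [::] (SP t) \in SP t.
Proof.
have [p hp] := SP_ex t.
by case: (SP t) hp => [//|x l] _ /=; rewrite inE eqxx.
Qed.

Lemma dd_le t q : q \in spaths adj s t -> dd t <= plen w s q.
Proof.
move=> hq; have := head_SP t; rewrite mem_SP0 => /andP[_ /allP]; apply.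
exact: hq.
Qed.

Lemma mem_SP1 t p : (p \in SP t) = (p \in spaths adj s t) && (plen w s p == dd t).
Proof.
have hh := head_SP t.
apply/idP/idP.
  move=> hp; have := hp; rewrite mem_SP0 => /andP[ps /allP al].
  rewrite ps /=; rewrite eq_le dd_le // andbT /dd.
  by apply: al; move: hh; rewrite mem_SP0 => /andP[].
move=> /andP[ps /eqP pl]; rewrite mem_SP0 ps /=; apply/allP => q hq.
by rewrite pl dd_le.
Qed.

Lemma dd_ge0 t : 0 <= dd t.
Proof.
have := head_SP t; rewrite mem_SP1 mem_spaths => /andP[/and3P[pp _ _] /eqP <-].
exact: plen_ge0.
Qed.

Lemma dd_s : dd s = 0.
Proof.
apply/eqP; rewrite eq_le dd_ge0 andbT.
have -> : 0 = plen w s [::] by rewrite plen_nil.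
by apply: dd_le; rewrite mem_spaths /= ?eqxx ?andbT.
Qed.

Lemma dd_tri x y : adj x y -> dd y <= dd x + w x y.
Proof.
move=> axy; have := head_SP x; set p := head _ _.
rewrite mem_SP1 mem_spaths => /andP[/and3P[pp up /eqP lp] /eqP pl].
have wp := w_pos axy.
case: (boolP (y \in s :: p)) => hy.
  case: (splitPl hy) pp up lp pl => p1 p2 ey.
  rewrite cat_path -cat_cons cat_uniq => /andP[pp1 pp2] /and3P[up1 _ _] _.
  rewrite plen_cat => pl.
  have : dd y <= plen w s p1 by apply: dd_le; rewrite mem_spaths pp1 up1 ey eqxx.
  have := plen_ge0 pp2; lra.
have : dd y <= plen w s (rcons p y).
  apply: dd_le; rewrite mem_spaths rcons_path pp lp axy last_rcons eqxx /=.
  rewrite andbT -[_ && uniq _]/(uniq (s :: rcons p y)) -rcons_cons rcons_uniq hy up. by [].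
by rewrite -cats1 plen_cat lp plen_cons plen_nil addr0 pl.
Qed.

Definition e : rel V := fun x y => adj x y && (dd x + w x y == dd y).

Lemma e_lt x y : e x y -> dd x < dd y.
Proof. by move=> /andP[a /eqP <-]; rewrite ltrDl w_pos. Qed.

Lemma tele a p : path adj a p ->
  dd (last a p) <= dd a + plen w a p /\
  ((dd (last a p) == dd a + plen w a p) = path e a p).
Proof.
elim: p a => [|x p IH] a /=; first by rewrite plen_nil addr0 lexx eqxx.
move=> /andP[ax px]; have [h1 h2] := IH _ px.
have t := dd_tri ax.
rewrite plen_cons; split; first lra.
rewrite -h2 /e ax /=.
apply/idP/idP.
  move=> /eqP h; apply/andP; split; apply/eqP; lra.
by move=> /andP[/eqP h3 /eqP h4]; apply/eqP; lra.
Qed.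

Lemma path_e_adj a p : path e a p -> path adj a p.
Proof. by apply: sub_path => x y /andP[]. Qed.

Lemma path_e_uniq a p : path e a p -> uniq (a :: p).
Proof.
move=> pe.
have : path (relpre dd <%R) a p by apply: sub_path pe => x y /e_lt.
rewrite -path_map => pm.
apply: (@map_uniq _ _ dd).
have := @sorted_uniq _ (<%R : rel R) (@lt_trans _ R) (@ltxx _ R) (map dd (a :: p)).
by apply; exact: pm.
Qed.

Lemma path_e_le a p : path e a p -> dd a <= dd (last a p).
Proof.
elim: p a => [|x p IH] a /=; first by [].
by move=> /andP[/e_lt h /IH]; apply: le_trans (ltW h).
Qed.

Lemma path_e_lt a p : path e a p -> p != [::] -> dd a < dd (last a p).
Proof.
case: p => [//|x p] /= /andP[/e_lt h /path_e_le h2] _.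
exact: lt_le_trans h h2.
Qed.

Lemma mem_SP t p : (p \in SP t) = path e s p && (last s p == t).
Proof.
rewrite mem_SP1 mem_spaths.
apply/idP/idP.
  move=> /andP[/and3P[pa _ /eqP lp] /eqP pl].
  have [h1 h2] := tele pa; rewrite -h2 lp pl dd_s add0r eqxx /=.
  by rewrite eqxx.
move=> /andP[pe /eqP lp]; have pa := path_e_adj pe.
rewrite pa path_e_uniq //= lp eqxx /=.
have [_ h2] := tele pa; move: h2; rewrite pe dd_s add0r lp => /eqP ->.
by rewrite eqxx.
Qed.

Lemma uniq_SP t : uniq (SP t).
Proof. by rewrite /shortest_paths /spaths !filter_uniq // undup_uniq. Qed.

Lemma SP_s : SP s = [:: [::]].
Proof.
have : perm_eq (SP s) [:: [::]].
  apply: uniq_perm; rewrite ?uniq_SP //.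
  move=> p; rewrite mem_SP inE.
  case: p => [|x p]; first by rewrite /= eqxx.
  apply/negbTE/negP => /andP[pe /eqP lp].
  by have := path_e_lt pe isT; rewrite lp ltxx.
exact: perm_small_eq.
Qed.

Lemma dd_pos_e x y : e x y -> y != s.
Proof.
move=> /e_lt h; apply/eqP => ys; move: h; rewrite ys dd_s.
by have := dd_ge0 x; lra.
Qed.

Definition predl t := [seq u <- enum V | e u t].

Lemma SP_dec t : t != s ->
  perm_eq (SP t) [seq rcons p t | u <- predl t, p <- SP u].
Proof.
move=> ts; apply: uniq_perm.
- exact: uniq_SP.
- apply: allpairs_uniq_dep.
  + by rewrite filter_uniq // enum_uniq.
  + by move=> x _; exact: uniq_SP.
  + move=> z1 z2 /allpairsPdep[x1 [y1 [_ h1 ->]]].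
    move=> /allpairsPdep[x2 [y2 [_ h2 ->]]] /= /rcons_inj [eq].
    move: h1 h2; rewrite !mem_SP => /andP[_ /eqP h1] /andP[_ /eqP h2].
    by rewrite -h1 -h2 eq.
- move=> q; rewrite mem_SP; apply/idP/idP.
  + move=> /andP[pe /eqP lq].
    case: (lastP q) pe lq => [|p x]; first by move=> _ lq; move: ts; rewrite -lq eqxx.
    rewrite rcons_path last_rcons => /andP[pp ex] xt; subst x.
    apply/allpairsPdep; exists (last s p), p; split => //.
      by rewrite mem_filter ex mem_enum.
    by rewrite mem_SP pp eqxx.
  + move=> /allpairsPdep[u [p [hu hp ->]]].
    move: hu hp; rewrite mem_filter mem_SP => /andP[ut _] /andP[pp /eqP lp].
    by rewrite rcons_path pp lp ut last_rcons eqxx.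
Qed.

Lemma count_SP_dec (P : pred (seq V)) t : t != s ->
  count P (SP t) = (\sum_(u | e u t) count (fun p => P (rcons p t)) (SP u))%N.
Proof.
move=> ts; rewrite (permP (SP_dec ts)) count_flatten sumnE big_map.
rewrite big_map /predl big_filter big_enum_cond /=.
by apply: eq_bigr => u _; rewrite count_map.
Qed.

Notation sig := (sigma adj w s).
Notation thr := (sigma_through adj w s).

Lemma sig_s : sig s = 1%N.
Proof. by rewrite /sigma SP_s. Qed.

Lemma sig_rec t : t != s -> sig t = (\sum_(u | e u t) sig u)%N.
Proof.
move=> ts; rewrite /sigma -count_predT count_SP_dec //.
Qed.

Lemma sig_gt0 t : (0 < sig t)%N.
Proof. by have [p hp] := SP_ex t; rewrite /sigma; case: (SP t) hp. Qed.

Lemma thr_s v : thr s v = (v == s).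
Proof. by rewrite /sigma_through SP_s /= inE addn0. Qed.

Lemma path_e_mem_le a p x : path e a p -> x \in a :: p -> dd x <= dd (last a p).
Proof.
elim: p a => [|y p IH] a /=; first by rewrite inE => _ /eqP ->.
move=> /andP[/e_lt h pp]; rewrite inE => /orP[/eqP ->|hx].
  exact: le_trans (ltW h) (path_e_le pp).
exact: IH.
Qed.

Lemma thr_zero u v : dd u < dd v -> thr u v = 0%N.
Proof.
move=> h; rewrite /sigma_through; apply/eqP; rewrite -leqn0 leqNgt -has_count.
apply/hasP => -[p]; rewrite mem_SP => /andP[pe /eqP lp] hv.
by have := path_e_mem_le pe hv; rewrite lp leNgt h.
Qed.

Lemma thr_rec v t : t != s ->
  thr t v = ((v == t) * sig t + \sum_(u | e u t) thr u v)%N.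
Proof.
move=> ts; rewrite /sigma_through count_SP_dec //.
case: (altP (v =P t)) => [vt|nvt].
  subst v; rewrite mul1n.
  rewrite (eq_bigr (fun u => sig u)); last first.
    by move=> u _; rewrite /sigma -count_predT; apply: eq_count => p;
       rewrite -rcons_cons mem_rcons inE eqxx.
  rewrite -sig_rec // -[LHS]addn0; congr (_ + _)%N.
  rewrite big1 // => u /e_lt eut.
  exact: thr_zero.
rewrite mul0n add0n; apply: eq_bigr => u _; apply: eq_count => p.
by rewrite -rcons_cons mem_rcons inE (negbTE nvt).
Qed.

Lemma dd_ind (P : V -> Prop) :
  (forall t, (forall u, dd u < dd t -> P u) -> P t) -> forall t, P t.
Proof.
move=> H.
suff: forall n t, (#|[pred y | (dd y < dd t)%R]| < n)%N -> P t.
  by move=> h t; apply: (h _ t (ltnSn _)).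
elim=> [//|n IH] t ht; apply: H => u hu; apply: IH.
have hp : (#|[pred y | (dd y < dd u)%R]| < #|[pred y | (dd y < dd t)%R]|)%N.
  apply: proper_card; apply/properP; split.
    by apply/subsetP => y; rewrite !inE => /lt_trans; apply.
  by exists u; rewrite !inE ?hu ?ltxx.
by apply: leq_trans hp _; rewrite -ltnS.
Qed.

Lemma thr_xx x : thr x x = sig x.
Proof.
case: (altP (x =P s)) => [->|xs]; first by rewrite thr_s sig_s eqxx.
rewrite thr_rec // eqxx mul1n big1 ?addn0 // => u /e_lt h.
exact: thr_zero.
Qed.

Lemma sigR_neq0 x : (sig x)%:R != 0 :> R.
Proof. by rewrite pnatr_eq0 -lt0n sig_gt0. Qed.

Lemma thr_unif v t :
  (thr t v)%:R = ((t == v) * sig v)%:R +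
     \sum_(x | e v x) (sig v)%:R / (sig x)%:R * (thr t x)%:R :> R.
Proof.
elim/dd_ind: t => t IH.
case: (altP (t =P s)) => [->|ts].
  rewrite thr_s big1 ?addr0; last first.
    by move=> x /dd_pos_e xs; rewrite thr_s (negbTE xs) mulr0.
  case: (altP (s =P v)) => [<-|nsv]; first by rewrite sig_s eqxx.
  by rewrite eq_sym (negbTE nsv).
have hA : \sum_(u | e u t) ((u == v) * sig v)%:R = ((e v t) * sig v)%:R :> R.
  case: (boolP (e v t)) => evt.
    rewrite (bigD1 v) //= eqxx big1 ?addr0 // => u /andP[_ /negbTE ->].
    by rewrite mul0n.
  rewrite big1 ?mul0n // => u eut; case: (altP (u =P v)) => [uv|]; last by rewrite mul0n.
  by move: evt; rewrite -uv eut.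
have hB : \sum_(x | e v x) (sig v)%:R / (sig x)%:R * ((x == t) * sig t)%:R
     = ((e v t) * sig v)%:R :> R.
  case: (boolP (e v t)) => evt.
    rewrite (bigD1 t) //= eqxx big1 ?addr0.
      by rewrite mul1n mul1n mulfVK ?sigR_neq0.
    by move=> x /andP[_ /negbTE ->]; rewrite mul0n mulr0.
  rewrite big1 ?mul0n // => x evx; case: (altP (x =P t)) => [xt|]; last by rewrite mul0n mulr0.
  by move: evt; rewrite -xt evx.
have hR : \sum_(x | e v x) (sig v)%:R / (sig x)%:R * (thr t x)%:R =
   (e v t * sig v)%:R + \sum_(u | e u t) \sum_(x | e v x)
        (sig v)%:R / (sig x)%:R * (thr u x)%:R :> R.
  rewrite (eq_bigr (fun x => (sig v)%:R / (sig x)%:R * ((x == t) * sig t)%:R +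
     \sum_(u | e u t) (sig v)%:R / (sig x)%:R * (thr u x)%:R)); last first.
    move=> x evx; rewrite thr_rec // natrD natr_sum mulrDr mulr_sumr.
    by rewrite eq_sym.
  by rewrite big_split /= hB exchange_big.
rewrite hR thr_rec // natrD natr_sum.
rewrite (eq_bigr (fun u => ((u == v) * sig v)%:R +
     \sum_(x | e v x) (sig v)%:R / (sig x)%:R * (thr u x)%:R)); last first.
  by move=> u /e_lt h; exact: IH.
rewrite big_split /= hA.
congr (_ + _).
case: (altP (v =P t)) => [->|nvt]; first by rewrite eqxx.
by rewrite eq_sym (negbTE nvt) !mul0n.
Qed.

Lemma brandes v : bc adj w v s =
  (sig v)%:R * \sum_(x | e v x) Defs.ratio (bc adj w x s) (sig x)%:R.
Proof.
rewrite /bc.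
rewrite (eq_bigr (fun t => \sum_(x | e v x)
      (sig v)%:R / (sig x)%:R * ((thr t x)%:R / (sig t)%:R))); last first.
  move=> t tv; rewrite thr_unif (negbTE tv) mul0n add0r mulr_suml.
  by apply: eq_bigr => x _; rewrite mulrA.
rewrite exchange_big /= mulr_sumr; apply: eq_bigr => x evx.
rewrite -mulr_sumr /Defs.ratio (negbTE (sigR_neq0 x)).
have -> : \sum_(t | t != v) (thr t x)%:R / (sig t)%:R
        = \sum_(t : V) (thr t x)%:R / (sig t)%:R :> R.
  rewrite [RHS](bigD1 v) //= thr_zero ?mul0r ?add0r //; exact: e_lt.
rewrite (bigD1 x) //= thr_xx divff ?sigR_neq0 //.
by rewrite addrC -!mulrA [_^-1 * _]mulrC.
Qed.

Lemma SP_size_le t p : p \in SP t -> (size p <= hopdiam adj w)%N.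
Proof.
move=> hp; apply: (@leq_trans (maxhop adj w s t)).
  exact: (@leq_bigmax_seq _ _ predT (fun q => size q) p).
apply: (@leq_trans (\max_(t0 : V) maxhop adj w s t0)).
  exact: (@leq_bigmax _ (fun t0 => maxhop adj w s t0)).
exact: (@leq_bigmax _ (fun s0 => \max_(t0 : V) maxhop adj w s0 t0)).
Qed.


Definition tri (D0 : \bar R) (N0 P0 : {set V}) (u : V) (dw dmw : \bar R) :=
  if (dw < D0)%E then (dw, N0 :\ u, P0 :\ u)
  else if dw == D0 then (D0, u |: (N0 :\ u), P0 :\ u)
  else if dmw == D0 then (D0, N0 :\ u, u |: (P0 :\ u))
  else (D0, N0 :\ u, P0 :\ u).

Lemma proc_other v st u t d sb b : t != s ->
  let st' := process w v st u t d sb b in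
  [/\ Dv st' s = Dv st s, NH st' s = NH st s, PH st' s = PH st s,
      (forall x, Sv st' x s = Sv st x s) & (forall x, Bv st' x s = Bv st x s)].
Proof.
move=> ts /=; rewrite /process.
set T := (if _ then _ else _); case: T => [[D1 N1] P1] /=.
by rewrite /upd eq_sym (negbTE ts); split => // x; rewrite !andbF.
Qed.

Lemma proc_s v st u d sb b : u != v ->
  let st' := process w v st u s d sb b in
  let T := tri (Dv st s) (NH st s) (PH st s) u (d + (w u v)%:E)%E (d - (w u v)%:E)%E in
  [/\ Dv st' s = T.1.1, NH st' s = T.1.2, PH st' s = T.2,
      Sv st' u s = sb /\ Bv st' u s = b &
      forall x, x != u -> x != v -> Sv st' x s = Sv st x s /\ Bv st' x s = Bv st x s].
Proof.
move=> uv /=; rewrite /process /tri.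
set T := (if _ then _ else _); case: T => [[D1 N1] P1] /=.
rewrite /upd !eqxx; split => //.
  by rewrite !andbT (negbTE uv).
by move=> x xu xv; rewrite (negbTE xu) (negbTE xv).
Qed.

Lemma proc_s_vv v st u d sb b : u != v ->
  let st' := process w v st u s d sb b in
  v \notin NH st' s -> v \notin PH st' s ->
  (Sv st' v s = if s != v then \sum_(x in NH st' s) Sv st' x s else Sv st v s) /\
  Bv st' v s = Sv st' v s * \sum_(x in PH st' s) Defs.ratio (Bv st' x s) (Sv st' x s).
Proof.
move=> uv /=; rewrite /process.
set T := (if _ then _ else _); case: T => [[D1 N1] P1] /=.
rewrite /upd !eqxx /= => nN nP; split.
  case: ifP => _; last by rewrite andbT eq_sym (negbTE uv).
  apply: eq_bigr => x xN.
  have -> : (x == v) = false by apply/negbTE; apply: contraNneq nN => <-.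
  by [].
congr (_ * _); apply: eq_bigr => x xP.
have -> : (x == v) = false by apply/negbTE; apply: contraNneq nP => <-.
by [].
Qed.

Lemma dtri_E u v d : adj u v -> ((dd u)%:E <= d)%E ->
  ((dd v)%:E <= d + (w u v)%:E)%E.
Proof.
move=> auv; case: d => [r| |] //=.
  rewrite !lee_fin => h; have := dd_tri auv; lra.
by move=> _; rewrite addye ?leey.
Qed.

Lemma tri_N D0 N0 P0 u dw dmw x :
  x \in (tri D0 N0 P0 u dw dmw).1.2 -> (x == u) || (x \in N0).
Proof.
rewrite /tri; case: ifP => _ /=; [|case: ifP => _ /=; [|case: ifP => _ /=]];
  by rewrite !inE; case: (x == u) => //=.
Qed.

Lemma tri_P D0 N0 P0 u dw dmw x :
  x \in (tri D0 N0 P0 u dw dmw).2 -> (x == u) || (x \in P0).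
Proof.
rewrite /tri; case: ifP => _ /=; [|case: ifP => _ /=; [|case: ifP => _ /=]];
  by rewrite !inE; case: (x == u) => //=.
Qed.

Definition Invl (v : V) (st : lstate V R) :=
  [/\ ((dd v)%:E <= Dv st s)%E, NH st s \subset [set u | adj v u],
      PH st s \subset [set u | adj v u] & (v = s -> Sv st s s = 1)].

Definition Inv (c : config V R) := forall x, Invl x (c x).

Lemma foldl_ind (A : Type) (B : eqType) (P : A -> Prop) (f : A -> B -> A)
   (l : seq B) (a : A) :
  P a -> (forall a' b, b \in l -> P a' -> P (f a' b)) -> P (foldl f a l).
Proof.
elim: l a => [|b l IH] a //= Pa H; apply: IH.
  by apply: H => //; rewrite inE eqxx.
by move=> a' b' hb; apply: H; rewrite inE hb orbT.
Qed.

Lemma adj_neq v u : adj v u -> u != v.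
Proof. by move=> h; apply/eqP => e; move: h; rewrite e adj_irr. Qed.

Lemma inv_step c v st m : Inv c -> Invl v st -> adj v m.1 ->
  Invl v (deliver w c v st m).
Proof.
case: m => u t /= Ic [h1 h2 h3 h4] avu; rewrite /deliver /=.
have uv := adj_neq avu.
have auv : adj u v by rewrite adj_sym.
have [hu _ _ _] := Ic u.
case: (altP (t =P s)) => [->|ts].
  have [e1 e2 e3 _ _] := @proc_s v st u (Dv (c u) s) (Sv (c u) u s) (Bv (c u) u s) uv.
  have sN : NH (process w v st u s (Dv (c u) s) (Sv (c u) u s) (Bv (c u) u s)) s
              \subset [set u | adj v u].
    apply/subsetP => x; rewrite e2 => /tri_N /orP[/eqP->|hx]; first by rewrite inE.
    exact: (subsetP h2).
  have sP : PH (process w v st u s (Dv (c u) s) (Sv (c u) u s) (Bv (c u) u s)) s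
              \subset [set u | adj v u].
    apply/subsetP => x; rewrite e3 => /tri_P /orP[/eqP->|hx]; first by rewrite inE.
    exact: (subsetP h3).
  split => //.
    rewrite e1 /tri; case: ifP => _ /=; first exact: dtri_E.
    by case: ifP => _ /=; [|case: ifP => _ /=].
  move=> vs; subst v.
  have nN : s \notin NH (process w s st u s (Dv (c u) s) (Sv (c u) u s) (Bv (c u) u s)) s.
    by apply/negP => /(subsetP sN); rewrite inE adj_irr.
  have nP : s \notin PH (process w s st u s (Dv (c u) s) (Sv (c u) u s) (Bv (c u) u s)) s.
    by apply/negP => /(subsetP sP); rewrite inE adj_irr.
  have [-> _] := @proc_s_vv s st u (Dv (c u) s) (Sv (c u) u s) (Bv (c u) u s) uv nN nP.
  by rewrite eqxx /=; exact: h4.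
have [e1 e2 e3 e4 e5] := @proc_other v st u t (Dv (c u) t) (Sv (c u) u t) (Bv (c u) u t) ts.
by split; rewrite ?e1 ?e2 ?e3 ?e4.
Qed.

Lemma mem_msgs v u t : ((u, t) \in msgs adj v) = adj v u.
Proof.
apply/allpairsP/idP.
  by move=> [[x y] /= [hx _ [-> _]]]; move: hx; rewrite mem_filter => /andP[].
move=> h; exists (u, t); split => //=; last by rewrite mem_enum.
by rewrite mem_filter h mem_enum.
Qed.

Lemma uniq_msgs v : uniq (msgs adj v).
Proof.
apply: allpairs_uniq; rewrite ?filter_uniq ?enum_uniq ?index_enum_uniq // -?enumT ?enum_uniq //.
by move=> [a b] [a' b'] _ _ /=.
Qed.

Variable sched : nat -> V -> seq (V * V).
Hypothesis sched_ok : forall (k : nat) (v : V), perm_eq (sched k v) (msgs adj v).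

Notation run := (run w sched).

Lemma sched_adj k v m : m \in sched k v -> adj v m.1.
Proof. by case: m => u t; rewrite (perm_mem (sched_ok k v)) mem_msgs. Qed.

Lemma sched_mem k v u t : ((u, t) \in sched k v) = adj v u.
Proof. by rewrite (perm_mem (sched_ok k v)) mem_msgs. Qed.

Lemma sched_uniq k v : uniq (sched k v).
Proof. by rewrite (perm_uniq (sched_ok k v)) uniq_msgs. Qed.

Lemma run_S k z : run k.+1 z = foldl (deliver w (run k) z) (run k z) (sched k z).
Proof. by []. Qed.

Lemma Inv_run k : Inv (run k).
Proof.
elim: k => [|k IH] x.
  rewrite /= /init_state; split => //=; rewrite ?sub0set //.
  - by case: ifP => [/eqP<-|_]; rewrite ?dd_s ?lexx ?leey.
  - by move=> ->; rewrite eqxx.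
rewrite run_S; apply: foldl_ind; first exact: IH.
by move=> st m hm hst; apply: inv_step => //; exact: sched_adj hm.
Qed.

Lemma Inv_state_at k j x : Invl x (state_at w sched k j x).
Proof.
apply: foldl_ind; first exact: Inv_run.
move=> st m hm hst; apply: inv_step => //; first exact: Inv_run.
exact: sched_adj (mem_take hm).
Qed.

Lemma D_step_le c v st m : adj v m.1 ->
  (Dv (deliver w c v st m) s <= Dv st s)%E.
Proof.
case: m => u t /= avu; rewrite /deliver /=.
have uv := adj_neq avu.
case: (altP (t =P s)) => [->|ts].
  have [-> _ _ _ _] := @proc_s v st u (Dv (c u) s) (Sv (c u) u s) (Bv (c u) u s) uv.
  rewrite /tri; case: ifP => h /=; first exact: ltW.
  by case: ifP => _ /=; [|case: ifP => _ /=].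
by have [-> _ _ _ _] := @proc_other v st u t (Dv (c u) t) (Sv (c u) u t) (Bv (c u) u t) ts.
Qed.

Lemma D_step_msg c v st u : adj v u ->
  (Dv (deliver w c v st (u, s)) s <= Dv (c u) s + (w u v)%:E)%E.
Proof.
move=> avu; rewrite /deliver /=.
have uv := adj_neq avu.
have [-> _ _ _ _] := @proc_s v st u (Dv (c u) s) (Sv (c u) u s) (Bv (c u) u s) uv.
rewrite /tri; case: ifP => h /=; first by [].
rewrite (_ : (if _ then _ else _).1.1 = Dv st s); last by case: ifP => //; case: ifP.
by rewrite leNgt h.
Qed.

Lemma D_fold_le c v st l : (forall m, m \in l -> adj v m.1) ->
  (Dv (foldl (deliver w c v) st l) s <= Dv st s)%E.
Proof.
move=> hl; apply: (@foldl_ind _ _ (fun st' => (Dv st' s <= Dv st s)%E)) => //.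
move=> a m hm h; apply: le_trans h; apply: D_step_le; exact: hl.
Qed.

Lemma D_fold_msg c v st l u : (forall m, m \in l -> adj v m.1) -> (u, s) \in l ->
  (Dv (foldl (deliver w c v) st l) s <= Dv (c u) s + (w u v)%:E)%E.
Proof.
elim: l st => [//|m l IH] st hl /=; rewrite inE => /orP[/eqP em|hu].
  subst m; apply: le_trans (@D_fold_le c v _ l _) _.
    by move=> m hm; apply: hl; rewrite inE hm orbT.
  by apply: D_step_msg; have := hl (u, s); rewrite inE eqxx; apply.
apply: IH => //; by move=> m' hm; apply: hl; rewrite inE hm orbT.
Qed.

Lemma D_bound k z p : p \in SP z -> (size p <= k)%N ->
  (Dv (run k z) s <= (dd z)%:E)%E.
Proof.
elim: k z p => [|k IH] z p.
  case: p => [|//] /[swap] _; rewrite mem_SP /= => /eqP <-.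
  by rewrite /= /init_state eqxx dd_s.
case: (lastP p) => [|q x].
  rewrite mem_SP /= => /eqP <- _.
  have h1 := IH s [::] (ltac:(by rewrite SP_s inE)) (isT).
  apply: le_trans h1; apply: D_fold_le => m; exact: sched_adj.
rewrite mem_SP rcons_path last_rcons size_rcons => /andP[/andP[pq eqx] /eqP xz] hs.
subst x; set u := last s q in eqx.
have hq : q \in SP u by rewrite mem_SP pq eqxx.
have auz : adj u z by case/andP: eqx.
apply: le_trans (@D_fold_msg (run k) z (run k z) (sched k z) u _ _) _.
- by move=> m; exact: sched_adj.
- by rewrite sched_mem adj_sym.
apply: le_trans (_ : ((dd u)%:E + (w u z)%:E <= _)%E).
  by rewrite leeD2r // (IH u q hq hs).
by rewrite -EFinD lee_fin; case/andP: eqx => _ /eqP ->.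
Qed.

Lemma D_exact k z : (exists2 p, p \in SP z & (size p <= k)%N) ->
  Dv (run k z) s = (dd z)%:E.
Proof.
move=> [p hp hs]; apply/eqP; rewrite eq_le (D_bound hp hs).
by have [] := Inv_run k z.
Qed.

Lemma D_exact_H k z : (hopdiam adj w <= k)%N -> Dv (run k z) s = (dd z)%:E.
Proof.
move=> hk; apply: D_exact; have [p hp] := SP_ex z; exists p => //.
exact: leq_trans (SP_size_le hp) hk.
Qed.

Lemma stored_step_other c v st m u : adj v m.1 -> m != (u, s) -> u != v ->
  Sv (deliver w c v st m) u s = Sv st u s /\ Bv (deliver w c v st m) u s = Bv st u s.
Proof.
case: m => u' t /= avu mu uv; rewrite /deliver /=.
have u'v := adj_neq avu.
case: (altP (t =P s)) => [ets|ts].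
  subst t.
  have [_ _ _ _ h] := @proc_s v st u' (Dv (c u') s) (Sv (c u') u' s) (Bv (c u') u' s) u'v.
  apply: h => //; apply: contraNneq mu => ->; by [].
by have [_ _ _ -> ->] := @proc_other v st u' t (Dv (c u') t) (Sv (c u') u' t) (Bv (c u') u' t) ts.
Qed.

Lemma stored_fold_keep c v st l u : (forall m, m \in l -> adj v m.1) ->
  (u, s) \notin l -> u != v ->
  Sv (foldl (deliver w c v) st l) u s = Sv st u s /\
  Bv (foldl (deliver w c v) st l) u s = Bv st u s.
Proof.
move=> hl nu uv.
apply: (@foldl_ind _ _ (fun st' => Sv st' u s = Sv st u s /\ Bv st' u s = Bv st u s)) => //.
move=> a m hm [h1 h2].
have mu : m != (u, s) by apply: contraNneq nu => <-.
have [h3 h4] := @stored_step_other c v a m u (hl m hm) mu uv.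
by rewrite h3 h4.
Qed.

Lemma stored_fold c v st l u : uniq l -> (forall m, m \in l -> adj v m.1) ->
  (u, s) \in l ->
  Sv (foldl (deliver w c v) st l) u s = Sv (c u) u s /\
  Bv (foldl (deliver w c v) st l) u s = Bv (c u) u s.
Proof.
elim: l st => [//|m l IH] st /= /andP[ml ul] hl; rewrite inE => /orP[/eqP em|hu].
  subst m.
  have avu : adj v u by have := hl (u, s); rewrite inE eqxx; apply.
  have uv := adj_neq avu.
  have hl' : forall m, m \in l -> adj v m.1.
    by move=> m hm; apply: hl; rewrite inE hm orbT.
  have [-> ->] := @stored_fold_keep c v (deliver w c v st (u, s)) l u hl' ml uv.
  rewrite /deliver /=.
  by have [_ _ _ [-> ->] _] := @proc_s v st u (Dv (c u) s) (Sv (c u) u s) (Bv (c u) u s) uv.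
by apply: IH => // m' hm; apply: hl; rewrite inE hm orbT.
Qed.

Definition Cons v (st : lstate V R) :=
  (s != v -> Sv st v s = \sum_(x in NH st s) Sv st x s) /\
  Bv st v s = Sv st v s * \sum_(x in PH st s) Defs.ratio (Bv st x s) (Sv st x s).

Lemma cons_step_s c v st u : Inv c -> Invl v st -> adj v u ->
  Cons v (deliver w c v st (u, s)).
Proof.
move=> Ic hst avu.
have := @inv_step c v st (u, s) Ic hst avu; rewrite /deliver /= => -[_ hN hP _].
have uv := adj_neq avu.
have nN : v \notin NH (process w v st u s (Dv (c u) s) (Sv (c u) u s) (Bv (c u) u s)) s.
  by apply/negP => /(subsetP hN); rewrite inE adj_irr.
have nP : v \notin PH (process w v st u s (Dv (c u) s) (Sv (c u) u s) (Bv (c u) u s)) s.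
  by apply/negP => /(subsetP hP); rewrite inE adj_irr.
have [h1 h2] := @proc_s_vv v st u (Dv (c u) s) (Sv (c u) u s) (Bv (c u) u s) uv nN nP.
by split => // sv; rewrite h1 sv.
Qed.

Lemma cons_step_other c v st m : m.2 != s -> Cons v st ->
  Cons v (deliver w c v st m).
Proof.
case: m => u t /= ts [c1 c2]; rewrite /deliver /=.
have [e1 e2 e3 e4 e5] := @proc_other v st u t (Dv (c u) t) (Sv (c u) u t) (Bv (c u) u t) ts.
split; rewrite ?e2 ?e3 ?e4 ?e5.
  by move=> sv; rewrite c1 //; apply: eq_bigr => x _; rewrite e4.
by rewrite c2; congr (_ * _); apply: eq_bigr => x _; rewrite e4 e5.
Qed.

Lemma cons_fold c v st l : Inv c -> Invl v st -> (forall m, m \in l -> adj v m.1) ->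
  has (fun m => m.2 == s) l -> Cons v (foldl (deliver w c v) st l).
Proof.
move=> Ic.
elim: l st => [//|m l IH] st hst hl /= /orP[ms|hs].
  have hm : adj v m.1 by apply: hl; rewrite inE eqxx.
  suff : Invl v (foldl (deliver w c v) (deliver w c v st m) l) /\
         Cons v (foldl (deliver w c v) (deliver w c v st m) l) by case.
  apply: (@foldl_ind _ _ (fun st' => Invl v st' /\ Cons v st')).
  - split; first exact: inv_step.
    move: ms hm; case: m {hl IH} => u t /= /eqP -> hm; exact: cons_step_s.
  - move=> a m' hm' [ha hc]; have hm'' : adj v m'.1 by apply: hl; rewrite inE hm' orbT.
    split; first exact: inv_step.
    case: (altP (m'.2 =P s)) => [e|ne]; last exact: cons_step_other.
    by case: m' hm' hm'' e => u t /= _ hm'' ->; exact: cons_step_s.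
apply: IH => //; first by apply: inv_step => //; apply: hl; rewrite inE eqxx.
by move=> m' hm'; apply: hl; rewrite inE hm' orbT.
Qed.

Definition condN (c : config V R) v x := (Dv (c x) s + (w x v)%:E == (dd v)%:E)%E.
Definition condP (c : config V R) v x :=
  ~~ condN c v x && (Dv (c x) s - (w x v)%:E == (dd v)%:E)%E.

Lemma nh_step c v st u : Inv c -> adj v u -> Dv st s = (dd v)%:E ->
  [/\ Dv (deliver w c v st (u, s)) s = (dd v)%:E,
      forall x, (x \in NH (deliver w c v st (u, s)) s) =
                 (if x == u then condN c v u else x \in NH st s) &
      forall x, (x \in PH (deliver w c v st (u, s)) s) =
                 (if x == u then condP c v u else x \in PH st s)].
Proof.
move=> Ic avu hD; rewrite /deliver /=.
have uv := adj_neq avu.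
have [e1 e2 e3 _ _] := @proc_s v st u (Dv (c u) s) (Sv (c u) u s) (Bv (c u) u s) uv.
rewrite e1 e2 e3 /tri hD.
have [hu _ _ _] := Ic u.
have -> : (Dv (c u) s + (w u v)%:E < (dd v)%:E)%E = false.
  by apply/negbTE; rewrite -leNgt; apply: dtri_E => //; rewrite adj_sym.
rewrite /condP /condN; case: ifP => h1 /=.
  by split => // x; rewrite !inE; case: (altP (x =P u)) => [->|xu] /=; rewrite ?h1.
case: ifP => h2 /=.
  by split => // x; rewrite !inE; case: (altP (x =P u)) => [->|xu] /=; rewrite ?h1 ?h2.
by split => // x; rewrite !inE; case: (altP (x =P u)) => [->|xu] /=; rewrite ?h1 ?h2.
Qed.

Lemma nh_fold c v st l : Inv c -> uniq l -> (forall m, m \in l -> adj v m.1) ->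
  Dv st s = (dd v)%:E ->
  [/\ Dv (foldl (deliver w c v) st l) s = (dd v)%:E,
      forall x, (x \in NH (foldl (deliver w c v) st l) s) =
        (if (x, s) \in l then condN c v x else x \in NH st s) &
      forall x, (x \in PH (foldl (deliver w c v) st l) s) =
        (if (x, s) \in l then condP c v x else x \in PH st s)].
Proof.
move=> Ic; elim: l st => [|m l IH] st; first by [].
move=> /= /andP[ml ul] hl hD.
have hl' : forall m', m' \in l -> adj v m'.1 by move=> m' h; apply: hl; rewrite inE h orbT.
have hm : adj v m.1 by apply: hl; rewrite inE eqxx.
case: m ml hl hm => u t ml hl hm.
case: (altP (t =P s)) => [ets|ts].
  subst t; have [d1 n1 p1] := @nh_step c v st u Ic hm hD.
  have [d2 n2 p2] := IH _ ul hl' d1.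
  split => // x; rewrite ?n2 ?p2 ?n1 ?p1 inE;
    case: (altP (x =P u)) => [->|xu] /=; rewrite ?eqxx ?(negbTE ml) //=;
    by rewrite xpair_eqE (negbTE xu).
have [e1 e2 e3 _ _] := @proc_other v st u t (Dv (c u) t) (Sv (c u) u t) (Bv (c u) u t) ts.
have [d2 n2 p2] := IH (deliver w c v st (u, t)) ul hl' (etrans e1 hD).
split => // x; rewrite ?n2 ?p2 /deliver /= ?e2 ?e3 inE xpair_eqE [s == t]eq_sym (negbTE ts) andbF //.
Qed.

Lemma phase_NH c v l : Inv c -> perm_eq l (msgs adj v) -> Dv (c v) s = (dd v)%:E ->
  [/\ Dv (foldl (deliver w c v) (c v) l) s = (dd v)%:E,
      NH (foldl (deliver w c v) (c v) l) s = [set x | adj v x && condN c v x] &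
      PH (foldl (deliver w c v) (c v) l) s = [set x | adj v x && condP c v x]].
Proof.
move=> Ic pl hD.
have ul : uniq l by rewrite (perm_uniq pl) uniq_msgs.
have hl : forall m, m \in l -> adj v m.1.
  by case=> u t; rewrite (perm_mem pl) mem_msgs.
have [d n p] := nh_fold Ic ul hl hD.
have [_ hN hP _] := Ic v.
split => //; apply/setP => x; rewrite ?n ?p inE (perm_mem pl) mem_msgs;
  case: ifP => // ax.
  by apply/negbTE/negP => /(subsetP hN); rewrite inE ax.
by apply/negbTE/negP => /(subsetP hP); rewrite inE ax.
Qed.

Lemma NH_exact c z : Inv c -> (forall u, e u z -> Dv (c u) s = (dd u)%:E) ->
  [set x | adj z x && condN c z x] = [set x | e x z].
Proof.
move=> Ic hex; apply/setP => x; rewrite !inE /condN /e.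
case azx: (adj z x) => /=; last by rewrite adj_sym azx.
have axz : adj x z by rewrite adj_sym.
rewrite axz /=; apply/idP/idP.
  have [hx _ _ _] := Ic x.
  move: hx; case: (Dv (c x) s) => [r| |] //=.
  rewrite lee_fin -EFinD eqe => hr /eqP hz.
  have ht := dd_tri axz; apply/eqP; lra.
move=> h; rewrite hex; first by rewrite -EFinD eqe.
by rewrite /e axz.
Qed.

Lemma PH_exact c z : (forall u, adj z u -> Dv (c u) s = (dd u)%:E) ->
  [set x | adj z x && condP c z x] = [set x | e z x].
Proof.
move=> hex; apply/setP => x; rewrite !inE /condP /condN /e.
case azx: (adj z x) => //=.
have axz : adj x z by rewrite adj_sym.
rewrite hex // -EFinD -EFinB !eqe (w_sym axz).
have wp := w_pos azx.
apply/idP/idP.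
  by move=> /andP[_ /eqP h]; apply/eqP; lra.
move=> /eqP h; apply/andP; split; apply/eqP; lra.
Qed.

Variable v0 : V.
Hypothesis v0s : v0 != s.

Lemma nb x : exists u, adj x u.
Proof.
pose y := if x == s then v0 else s.
have yx : y != x.
  rewrite /y; case: ifP => [/eqP ->|/negbT h]; first exact: v0s.
  by rewrite eq_sym.
have /connectP[p pp ey] := connected x y.
case: p pp ey => [|u p] /=; first by move=> _ e; move: yx; rewrite e eqxx.
by move=> /andP[h _] _; exists u.
Qed.

Lemma has_s_msg k z : has (fun m => m.2 == s) (sched k z).
Proof.
have [u hu] := nb z; apply/hasP; exists (u, s) => //.
by rewrite sched_mem.
Qed.

Lemma S_s k : Sv (run k s) s s = 1.
Proof. by have [_ _ _ h] := Inv_run k s; apply: h. Qed.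

Lemma pred_bound z u p k : e u z -> p \in SP u ->
  (forall q, q \in SP z -> (size q <= k.+1)%N) -> (size p <= k)%N.
Proof.
move=> euz hp hb; have := hb (rcons p z).
rewrite size_rcons; apply; rewrite mem_SP rcons_path last_rcons eqxx andbT.
by move: hp; rewrite mem_SP => /andP[-> /eqP ->].
Qed.

Lemma sum_set_e (F : V -> R) z :
  \sum_(x in [set x | e x z]) F x = \sum_(x | e x z) F x.
Proof. by apply: eq_bigl => x; rewrite inE. Qed.

Lemma sum_set_e' (F : V -> R) z :
  \sum_(x in [set x | e z x]) F x = \sum_(x | e z x) F x.
Proof. by apply: eq_bigl => x; rewrite inE. Qed.

Lemma S_exact k z : z != s -> (forall p, p \in SP z -> (size p <= k)%N) ->
  Sv (run k.+1 z) z s = (sig z)%:R.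
Proof.
elim: k z => [|k IH] z zs hb.
  have [p hp] := SP_ex z; have := hb p hp; rewrite leqn0 => /nilP ep.
  by move: hp; rewrite ep mem_SP /= eq_sym (negbTE zs).
rewrite run_S.
have Ic := Inv_run k.+1.
have [c1 _] := cons_fold Ic (Ic z) (@sched_adj k.+1 z) (has_s_msg k.+1 z).
rewrite c1; last by rewrite eq_sym.
have hDz : Dv (run k.+1 z) s = (dd z)%:E.
  by apply: D_exact; have [p hp] := SP_ex z; exists p => //; apply: hb.
have [_ -> _] := phase_NH Ic (sched_ok k.+1 z) hDz.
rewrite NH_exact //; last first.
  move=> u euz; apply: D_exact; have [p hp] := SP_ex u; exists p => //.
  exact: leq_trans (pred_bound euz hp hb) (leqnSn _).
rewrite sum_set_e (sig_rec zs) natr_sum; apply: eq_bigr => x exz.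
have azx : adj z x by rewrite adj_sym; case/andP: exz.
have hxs : (x, s) \in sched k.+1 z by rewrite sched_mem.
have [-> _] := stored_fold (run k.+1) (run k.+1 z) (sched_uniq k.+1 z) (@sched_adj k.+1 z) hxs.
case: (altP (x =P s)) => [->|xs]; first by rewrite S_s sig_s.
apply: IH => // p hp; exact: pred_bound exz hp hb.
Qed.

Lemma S_exact_H k z : z != s -> (hopdiam adj w <= k)%N ->
  Sv (run k.+1 z) z s = (sig z)%:R.
Proof.
move=> zs hk; apply: S_exact => // p hp; exact: leq_trans (SP_size_le hp) hk.
Qed.

Lemma B_exact m : forall k v, v != s -> (forall q, path e v q -> (size q <= m)%N) ->
  (hopdiam adj w + 1 + m <= k)%N -> Bv (run k v) v s = bc adj w v s.
Proof.
elim/ltn_ind: m => m IHm k v vs fb hk.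
case: k hk => [|k] hk; first by rewrite addn1 in hk.
have hH : (hopdiam adj w <= k)%N by lia.
rewrite run_S.
have Ic := Inv_run k.
have [_ c2] := cons_fold Ic (Ic v) (@sched_adj k v) (has_s_msg k v).
rewrite c2.
have hDv : Dv (run k v) s = (dd v)%:E by apply: D_exact_H.
have [_ _ ->] := phase_NH Ic (sched_ok k v) hDv.
rewrite PH_exact; last by move=> u _; apply: D_exact_H.
rewrite -run_S (S_exact_H vs hH) brandes; congr (_ * _).
rewrite sum_set_e'; apply: eq_bigr => x evx.
have avx : adj v x by case/andP: evx.
have hxs : (x, s) \in sched k v by rewrite sched_mem.
have [-> ->] := stored_fold (run k) (run k v) (sched_uniq k v) (@sched_adj k v) hxs.
have xs : x != s by exact: dd_pos_e evx.
have m1 : (0 < m)%N by have := fb [:: x]; rewrite /= evx; apply.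
have k1 : (0 < k)%N by lia.
have hH' : (hopdiam adj w <= k.-1)%N by lia.
have eS : Sv (run k x) x s = (sig x)%:R by rewrite -(prednK k1); apply: S_exact_H.
rewrite eS (IHm m.-1) //.
- by lia.
- move=> q pq; have := fb (x :: q); rewrite /= evx pq /=.
  by move=> h; have := h isT; lia.
- by lia.
Qed.

Definition Ex v (st : lstate V R) :=
  [/\ Dv st s = (dd v)%:E, NH st s = [set u | e u v], PH st s = [set x | e v x],
      (forall x, adj v x -> Sv st x s = (sig x)%:R /\ (x != s -> Bv st x s = bc adj w x s)) &
      Sv st v s = (sig v)%:R /\ Bv st v s = bc adj w v s].

Definition Mex (c : config V R) := forall u,
  [/\ Dv (c u) s = (dd u)%:E, Sv (c u) u s = (sig u)%:R &
      (u != s -> Bv (c u) u s = bc adj w u s)].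

Lemma ex_step c v st m : v != s -> Mex c -> Ex v st -> adj v m.1 ->
  Ex v (deliver w c v st m).
Proof.
case: m => u t vs Mc [h1 h2 h3 h4 [h5 h6]] /= avu.
have uv := adj_neq avu; rewrite /deliver /=.
case: (altP (t =P s)) => [ets|ts]; last first.
  have [e1 e2 e3 e4 e5] := @proc_other v st u t (Dv (c u) t) (Sv (c u) u t) (Bv (c u) u t) ts.
  split; rewrite ?e1 ?e2 ?e3 ?e4 ?e5 //.
  by move=> x ax; rewrite e4 e5; exact: h4.
subst t.
have [hDu hSu hBu] := Mc u.
have [e1 e2 e3 [e4 e5] e6] := @proc_s v st u (Dv (c u) s) (Sv (c u) u s) (Bv (c u) u s) uv.
have auv : adj u v by rewrite adj_sym.
have hT : tri (Dv st s) (NH st s) (PH st s) u (Dv (c u) s + (w u v)%:E)%E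
              (Dv (c u) s - (w u v)%:E)%E = ((dd v)%:E, [set x | e x v], [set x | e v x]).
  rewrite h1 h2 h3 hDu -EFinD -EFinB /tri lte_fin !eqe.
  have tr := dd_tri auv; have wp := w_pos auv.
  have ewu : w v u = w u v by rewrite w_sym.
  have -> : (dd u + w u v < dd v) = false by apply/negbTE; rewrite -leNgt.
  have hA : (dd v + w u v == dd u) = (dd u - w u v == dd v).
    by apply/eqP/eqP; lra.
  have hB : (dd u + w u v == dd v) -> (dd v + w u v == dd u) = false.
    by move=> /eqP h0; apply/negbTE/eqP; lra.
  case: ifP => h.
    congr (_, _, _); apply/setP => x; rewrite !inE;
      case: (altP (x =P u)) => [->|xu] //=; rewrite /e ?auv ?avu ?h //=.
    by rewrite ewu hB.
  case: ifP => h'.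
    congr (_, _, _); apply/setP => x; rewrite !inE;
      case: (altP (x =P u)) => [->|xu] //=; rewrite /e ?auv ?avu ?h //=.
    by rewrite ewu hA h'.
  congr (_, _, _); apply/setP => x; rewrite !inE;
    case: (altP (x =P u)) => [->|xu] //=; rewrite /e ?auv ?avu ?h //=.
  by rewrite ewu hA h'.
rewrite hT /= in e1 e2 e3.
have nN : v \notin NH (process w v st u s (Dv (c u) s) (Sv (c u) u s) (Bv (c u) u s)) s.
  by rewrite e2 inE /e adj_irr.
have nP : v \notin PH (process w v st u s (Dv (c u) s) (Sv (c u) u s) (Bv (c u) u s)) s.
  by rewrite e3 inE /e adj_irr.
have [f1 f2] := @proc_s_vv v st u (Dv (c u) s) (Sv (c u) u s) (Bv (c u) u s) uv nN nP.
have hst : forall x, adj v x ->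
    Sv (process w v st u s (Dv (c u) s) (Sv (c u) u s) (Bv (c u) u s)) x s = (sig x)%:R /\
    (x != s -> Bv (process w v st u s (Dv (c u) s) (Sv (c u) u s) (Bv (c u) u s)) x s
               = bc adj w x s).
  move=> x ax; case: (altP (x =P u)) => [->|xu]; first by rewrite e4 e5.
  have [-> ->] := e6 x xu (adj_neq ax); exact: h4.
have hSv : Sv (process w v st u s (Dv (c u) s) (Sv (c u) u s) (Bv (c u) u s)) v s =
           (sig v)%:R.
  rewrite f1 eq_sym vs e2 sum_set_e (sig_rec vs) natr_sum; apply: eq_bigr => x exv.
  by have [] := hst x (ltac:(by case/andP: exv; rewrite adj_sym)).
split => //; split => //.
rewrite f2 hSv e3 sum_set_e' brandes; congr (_ * _); apply: eq_bigr => x evx.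
have ax : adj v x by case/andP: evx.
have [-> ->] := hst x ax => //; exact: dd_pos_e evx.
Qed.

Lemma H_pos : (0 < hopdiam adj w)%N.
Proof.
have [p hp] := SP_ex v0; have := SP_size_le hp.
case: p hp => [|x p] hp; last by move=> /= h; lia.
by move: hp; rewrite mem_SP /= => h0; move: v0s; rewrite eq_sym h0.
Qed.

Lemma fb_H v q : v != s -> path e v q -> ((size q).+1 <= hopdiam adj w)%N.
Proof.
move=> vs pq; have [p hp] := SP_ex v.
have hpq : p ++ q \in SP (last v q).
  move: hp; rewrite !mem_SP cat_path last_cat => /andP[pp /eqP lp].
  by rewrite pp lp pq eqxx.
have := SP_size_le hpq; rewrite size_cat.
case: p hp {hpq} => [|x p] hp; last by move=> /= h; lia.
by move: hp; rewrite mem_SP /= => h0; move: vs; rewrite eq_sym h0.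
Qed.

Lemma B_exact2 k v : v != s -> (2 * hopdiam adj w <= k)%N ->
  Bv (run k v) v s = bc adj w v s.
Proof.
move=> vs hk; have hp := H_pos.
apply: (@B_exact (hopdiam adj w).-1) => //; last by lia.
by move=> q pq; have := fb_H vs pq; lia.
Qed.

Lemma Mex_run k : (2 * hopdiam adj w <= k)%N -> Mex (run k).
Proof.
move=> hk u; have hp := H_pos; split.
- by apply: D_exact_H; lia.
- case: (altP (u =P s)) => [->|us]; first by rewrite S_s sig_s.
  have k1 : (0 < k)%N by lia.
  by rewrite -(prednK k1); apply: S_exact_H => //; lia.
- by move=> us; apply: B_exact2.
Qed.

Lemma Ex_run k v : v != s -> (2 * hopdiam adj w + 1 <= k)%N -> Ex v (run k v).
Proof.
move=> vs hk; have hp := H_pos.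
case: k hk => [|k] hk; first by lia.
have hH : (hopdiam adj w <= k)%N by lia.
have Ic := Inv_run k.
have hDv : Dv (run k v) s = (dd v)%:E by apply: D_exact_H.
have [d n p] := phase_NH Ic (sched_ok k v) hDv.
split.
- by apply: D_exact_H; lia.
- by rewrite run_S n NH_exact // => u _; apply: D_exact_H.
- by rewrite run_S p PH_exact // => u _; apply: D_exact_H.
- move=> x ax.
  have hxs : (x, s) \in sched k v by rewrite sched_mem.
  have [-> ->] := stored_fold (run k) (run k v) (sched_uniq k v) (@sched_adj k v) hxs.
  have [_ h2 h3] := Mex_run (ltac:(lia) : (2 * hopdiam adj w <= k)%N) x.
  by split.
- split; first by apply: S_exact_H.
  by apply: B_exact2; lia.
Qed.

Lemma main_in k j v : v != s -> (2 * hopdiam adj w + 1 <= k)%N ->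
  Bv (state_at w sched k j v) v s = bc adj w v s.
Proof.
move=> vs hk.
have Mc : Mex (run k) by apply: Mex_run; lia.
suff : Ex v (state_at w sched k j v) by case=> _ _ _ _ [].
apply: foldl_ind; first exact: Ex_run.
move=> st m hm hst; apply: ex_step => //.
exact: sched_adj (mem_take hm).
Qed.

End Comb.

Unset Implicit Arguments.
Set Strict Implicit.

Theorem lemma4 (V : finType) (R : realFieldType) (adj : rel V)
  (w : V -> V -> R)
  (adj_sym : symmetric adj) (adj_irr : irreflexive adj)
  (connected : forall s t : V, connect adj s t)
  (w_sym : forall u v : V, adj u v -> w u v = w v u)
  (w_pos : forall u v : V, adj u v -> 0 < w u v)
  (sched : nat -> V -> seq (V * V))
  (sched_ok : forall (k : nat) (v : V), perm_eq (sched k v) (msgs adj v))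
  (k j : nat) (v s : V) :
  s != v -> (2 * hopdiam adj w + 1 <= k)%N ->
  Bv (state_at w sched k j v) v s = bc adj w v s.
Proof.
move=> sv hk.
have vs : v != s by rewrite eq_sym.
exact: (main_in adj_sym adj_irr connected w_sym w_pos sched_ok vs j vs hk).
Qed.
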